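(* Let $G$ be an infinite countable amenable group and $A\subseteq G$ a stable subset of positive upper Banach density. Then there are infinite sets $B\subseteq A\cdot A^{-1}$ and $C\subseteq A$ such that $B\cdot C\subseteq A$.
   Context: A sequence $(F_n)$ of finite subsets of a countable group $G$ is a (left) Følner sequence if $|F_n|\to\infty$ and $|F_n\cap gF_n|/|F_n|\to1$ for all $g\in G$; $G$ is amenable if it admits one. For a Følner sequence $\mathcal F$, $\bar d_{\mathcal F}(A)=\limsup_n|A\cap F_n|/|F_n|$, and the upper Banach density is $d^*(A)=\sup\{\bar d_{\mathcal F}(A):\mathcal F\text{ a left Følner sequence}\}$. A subset $A\subseteq G$ is stable if the relation $y\cdot x\in A$ is stable, i.e. there is $n$ such that there are no $a_1,\dots,a_n,b_1,\dots,b_n\in G$ with $b_j\cdot a_i\in A\iff i\le j$. *)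

(* Defs.v *)
From Stdlib Require Import Reals List Arith ClassicalEpsilon.
Import ListNotations.
Open Scope R_scope.

Record Group := {
  carrier :> Type;
  op : carrier -> carrier -> carrier;
  one : carrier;
  inv : carrier -> carrier;
  op_assoc : forall x y z, op x (op y z) = op (op x y) z;
  op_one_l : forall x, op one x = x;
  op_inv_l : forall x, op (inv x) x = one
}.

Section GroupDefs.
Variable G : Group.

Definition countable_group : Prop :=
  exists f : G -> nat, forall x y, f x = f y -> x = y.

Definition infinite_set (S : G -> Prop) : Prop :=
  exists f : nat -> G, (forall n m, f n = f m -> n = m) /\ (forall n, S (f n)).

Definition infinite_group : Prop := infinite_set (fun _ => True).

Definition cnt (P : G -> Prop) (l : list G) : nat :=
  length (filter (fun x => if excluded_middle_informative (P x) then true else false) l).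

(* Finite subsets F_n are represented by duplicate-free lists. *)
Definition Folner (F : nat -> list G) : Prop :=
  (forall n, NoDup (F n)) /\
  (forall M : nat, exists N, forall n, (N <= n)%nat -> (M <= length (F n))%nat) /\
  (forall g : G,
     Un_cv (fun n => INR (cnt (fun x => In x (map (op G g) (F n))) (F n))
                     / INR (length (F n))) 1).

Definition amenable : Prop := exists F, Folner F.

Definition is_limsup (u : nat -> R) (l : R) : Prop :=
  forall eps, 0 < eps ->
    (exists N, forall n, (N <= n)%nat -> u n < l + eps) /\
    (forall N, exists n, (N <= n)%nat /\ l - eps < u n).

Definition upper_density (F : nat -> list G) (A : G -> Prop) (d : R) : Prop :=
  is_limsup (fun n => INR (cnt A (F n)) / INR (length (F n))) d.

Definition upper_banach_density (A : G -> Prop) (d : R) : Prop :=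
  is_lub (fun r => exists F, Folner F /\ upper_density F A r) d.

Definition stable_set (A : G -> Prop) : Prop :=
  exists n : nat, ~ exists a b : nat -> G,
    forall i j, (i < n)%nat -> (j < n)%nat -> (A (op G (b j) (a i)) <-> (i <= j)%nat).

End GroupDefs.

(* Main.v *)
Require Import Defs.
From Stdlib Require Import Reals List Lia Lra Classical ClassicalEpsilon.
Import ListNotations.
Open Scope nat_scope.

Definition infn (X : nat -> Prop) := forall m, exists n, m <= n /\ X n.

Lemma incr_from_succ (f : nat -> nat) : (forall i, f i < f (S i)) -> forall i j, i < j -> f i < f j.
Proof.
  intros H i j Hij. induction Hij as [|j Hij IH]. apply H. specialize (H j). lia.
Qed.

Section Ramsey.
Variable R : nat -> nat -> Prop.

Definition bitP X v := infn (fun n => X n /\ v < n /\ R v n).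
Definition nextX (X : nat -> Prop) v : nat -> Prop :=
  if excluded_middle_informative (bitP X v) then (fun n => X n /\ v < n /\ R v n)
  else (fun n => X n /\ v < n /\ ~ R v n).

Lemma nextX_inf X v : infn X -> infn (nextX X v).
Proof.
  intro HX. unfold nextX. destruct (excluded_middle_informative (bitP X v)) as [H|H]; auto.
  assert (Hm : exists m, forall n, m <= n -> ~ (X n /\ v < n /\ R v n)).
  { apply NNPP; intro H1. apply H. intro m. apply NNPP; intro H2. apply H1. exists m.
    intros n Hn H3. apply H2. exists n; auto. }
  destruct Hm as [m Hm]. intro m'. destruct (HX (max m' (max m (S v)))) as [n [Hn HXn]].
  exists n. split. lia. split; auto. split. lia. intro HR. apply (Hm n). lia. split; auto. split; auto. lia.
Qed.

Lemma nextX_prop X v n : nextX X v n -> X n /\ v < n /\ (R v n <-> bitP X v).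
Proof.
  unfold nextX. destruct (excluded_middle_informative (bitP X v)) as [H|H]; intros [H1 [H2 H3]];
  repeat split; auto; tauto.
Qed.

Lemma exE X : exists n, infn X -> X n.
Proof.
  destruct (classic (infn X)) as [H|H]. destruct (H 0) as [n [_ Hn]]. exists n; auto.
  exists 0; intro; contradiction.
Qed.
Definition elt X := proj1_sig (constructive_indefinite_description _ (exE X)).
Lemma elt_spec X : infn X -> X (elt X).
Proof. unfold elt. destruct constructive_indefinite_description; auto. Qed.

Fixpoint rs (n : nat) : (nat -> Prop) * nat :=
  match n with
  | O => (fun _ => True, elt (fun _ => True))
  | S m => let X' := nextX (fst (rs m)) (snd (rs m)) in (X', elt X')
  end.
Definition Xs n := fst (rs n).
Definition vs n := snd (rs n).

Lemma Xs_S n : Xs (S n) = nextX (Xs n) (vs n).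
Proof. reflexivity. Qed.

Lemma Xs_inf n : infn (Xs n).
Proof.
  induction n as [|n IH]. intro m; exists m; split; auto; exact I.
  rewrite Xs_S. apply nextX_inf; auto.
Qed.

Lemma vs_in n : Xs n (vs n).
Proof.
  destruct n. apply (elt_spec (fun _ => True)). intro m; exists m; split; auto; exact I.
  apply (elt_spec (Xs (S n))). apply Xs_inf.
Qed.

Lemma Xs_mono n m x : n <= m -> Xs m x -> Xs n x.
Proof.
  intro H; induction H as [|m H IH]; auto.
  intro Hx. apply IH. rewrite Xs_S in Hx. apply nextX_prop in Hx. tauto.
Qed.

Lemma vs_rel n m : n < m -> vs n < vs m /\ (R (vs n) (vs m) <-> bitP (Xs n) (vs n)).
Proof.
  intro H. assert (Hx := Xs_mono (S n) m (vs m) H (vs_in m)).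
  rewrite Xs_S in Hx. apply nextX_prop in Hx. tauto.
Qed.

Lemma ramsey : exists phi : nat -> nat, (forall i j, i < j -> phi i < phi j) /\
  ((forall i j, i < j -> R (phi i) (phi j)) \/ (forall i j, i < j -> ~ R (phi i) (phi j))).
Proof.
  set (B := fun n => bitP (Xs n) (vs n)).
  destruct (classic (forall m, exists n, m <= n /\ B n)) as [H|H].
  - set (nxt := fun m => proj1_sig (constructive_indefinite_description _ (H m))).
    assert (Hnxt : forall m, m <= nxt m /\ B (nxt m)) by (intro m; unfold nxt; destruct constructive_indefinite_description; auto).
    set (e := fix e i := match i with O => nxt 0 | S k => nxt (S (e k)) end).
    assert (He : forall i, B (e i)) by (intro i; destruct i; apply Hnxt).
    assert (Hinc : forall i j, i < j -> e i < e j).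
    { apply incr_from_succ. intro i. simpl. specialize (Hnxt (S (e i))). lia. }
    exists (fun i => vs (e i)). split.
    + intros i j Hij. apply vs_rel. auto.
    + left. intros i j Hij. apply (vs_rel (e i) (e j) (Hinc i j Hij)). apply He.
  - assert (Hm : exists m, forall n, m <= n -> ~ B n).
    { apply NNPP; intro H1. apply H. intro m. apply NNPP; intro H2. apply H1. exists m.
      intros n Hn H3. apply H2. exists n; auto. }
    destruct Hm as [m Hm]. exists (fun i => vs (m + i)). split.
    + intros i j Hij. apply vs_rel. lia.
    + right. intros i j Hij HR. apply (Hm (m + i)). lia.
      apply (vs_rel (m + i) (m + j) ltac:(lia)). exact HR.
Qed.

End Ramsey.

Open Scope R_scope.

Section S1.
Variable G : Group.
Local Notation "x ** y" := (op G x y) (at level 40, left associativity).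

Lemma op_inv_r (x : G) : x ** inv G x = one G.
Proof.
  rewrite <- (op_one_l G (x ** inv G x)).
  rewrite <- (op_inv_l G (inv G x)) at 1.
  rewrite <- op_assoc. rewrite (op_assoc G (inv G x) x (inv G x)).
  rewrite op_inv_l, op_one_l. apply op_inv_l.
Qed.

Lemma op_one_r (x : G) : x ** one G = x.
Proof. rewrite <- (op_inv_l G x), op_assoc, op_inv_r. apply op_one_l. Qed.

Lemma cancel1 (a b : G) : a ** inv G b ** b = a.
Proof. rewrite <- op_assoc, op_inv_l. apply op_one_r. Qed.

Lemma cancel2 (a b : G) : a ** (inv G a ** b) = b.
Proof. rewrite op_assoc, op_inv_r. apply op_one_l. Qed.

Lemma cancel3 (a b : G) : inv G a ** (a ** b) = b.
Proof. rewrite op_assoc, op_inv_l. apply op_one_l. Qed.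

Lemma cancel4 (a b : G) : a ** b ** inv G b = a.
Proof. rewrite <- op_assoc, op_inv_r. apply op_one_r. Qed.

Lemma cnt_nil P : cnt G P [] = 0%nat.
Proof. reflexivity. Qed.

Lemma cnt_cons_t P x l : P x -> cnt G P (x :: l) = S (cnt G P l).
Proof.
  intro H. unfold cnt; simpl. destruct (excluded_middle_informative (P x)); [reflexivity|contradiction].
Qed.

Lemma cnt_cons_f P x l : ~ P x -> cnt G P (x :: l) = cnt G P l.
Proof.
  intro H. unfold cnt; simpl. destruct (excluded_middle_informative (P x)); [contradiction|reflexivity].
Qed.

Ltac cnt_case P x :=
  destruct (classic (P x)) as [?H|?H];
  [rewrite ?(cnt_cons_t P x) by (auto; tauto) | rewrite ?(cnt_cons_f P x) by (auto; tauto)].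

Lemma cnt_le_length P l : (cnt G P l <= length l)%nat.
Proof.
  induction l as [|x l IH]; simpl. reflexivity.
  destruct (classic (P x)).
  rewrite cnt_cons_t by auto; lia. rewrite cnt_cons_f by auto; lia.
Qed.

Lemma cnt_mono (P Q : G -> Prop) l : (forall x, In x l -> P x -> Q x) -> (cnt G P l <= cnt G Q l)%nat.
Proof.
  induction l as [|x l IH]; intro H; simpl. reflexivity.
  assert (IH' : (cnt G P l <= cnt G Q l)%nat) by (apply IH; intros; apply H; simpl; auto).
  destruct (classic (P x)) as [HP|HP].
  - rewrite cnt_cons_t by auto. rewrite (cnt_cons_t Q) by (apply H; simpl; auto). lia.
  - rewrite cnt_cons_f by auto. destruct (classic (Q x)).
    rewrite (cnt_cons_t Q) by auto; lia. rewrite (cnt_cons_f Q) by auto; lia.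
Qed.

Lemma cnt_ext (P Q : G -> Prop) l : (forall x, P x <-> Q x) -> cnt G P l = cnt G Q l.
Proof.
  intro H. apply Nat.le_antisymm; apply cnt_mono; intros; apply H; auto.
Qed.

Lemma cnt_or_and (P Q : G -> Prop) l :
  (cnt G (fun x => P x \/ Q x) l + cnt G (fun x => P x /\ Q x) l = cnt G P l + cnt G Q l)%nat.
Proof.
  induction l as [|x l IH]; simpl. reflexivity.
  destruct (classic (P x)) as [HP|HP]; destruct (classic (Q x)) as [HQ|HQ].
  - rewrite (cnt_cons_t (fun x => P x \/ Q x)) by auto.
    rewrite (cnt_cons_t (fun x => P x /\ Q x)) by auto.
    rewrite (cnt_cons_t P), (cnt_cons_t Q) by auto. lia.
  - rewrite (cnt_cons_t (fun x => P x \/ Q x)) by auto.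
    rewrite (cnt_cons_f (fun x => P x /\ Q x)) by tauto.
    rewrite (cnt_cons_t P), (cnt_cons_f Q) by auto. lia.
  - rewrite (cnt_cons_t (fun x => P x \/ Q x)) by auto.
    rewrite (cnt_cons_f (fun x => P x /\ Q x)) by tauto.
    rewrite (cnt_cons_f P), (cnt_cons_t Q) by auto. lia.
  - rewrite (cnt_cons_f (fun x => P x \/ Q x)) by tauto.
    rewrite (cnt_cons_f (fun x => P x /\ Q x)) by tauto.
    rewrite (cnt_cons_f P), (cnt_cons_f Q) by auto. lia.
Qed.

Lemma cnt_and_ge (P Q : G -> Prop) l :
  (cnt G P l + cnt G Q l <= cnt G (fun x => P x /\ Q x) l + length l)%nat.
Proof.
  pose proof (cnt_or_and P Q l). pose proof (cnt_le_length (fun x => P x \/ Q x) l). lia.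
Qed.

Lemma cnt_or_le (P Q : G -> Prop) l :
  (cnt G (fun x => P x \/ Q x) l <= cnt G P l + cnt G Q l)%nat.
Proof. pose proof (cnt_or_and P Q l). lia. Qed.

Lemma filter_In_iff (P : G -> Prop) l x :
  In x (filter (fun x => if excluded_middle_informative (P x) then true else false) l) <-> In x l /\ P x.
Proof.
  rewrite filter_In. destruct (excluded_middle_informative (P x)); intuition congruence.
Qed.

Lemma cnt_in_list l L : NoDup l -> (cnt G (fun x => In x L) l <= length L)%nat.
Proof.
  intro Hl. unfold cnt. apply NoDup_incl_length. apply NoDup_filter; auto.
  intros x Hx. apply filter_In_iff in Hx. tauto.
Qed.

Lemma cnt_translate (P : G -> Prop) g l : NoDup l ->
  (cnt G (fun y => P y /\ In y (map (op G g) l)) l <= cnt G (fun x => P (g ** x)) l)%nat.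
Proof.
  intro Hl. unfold cnt.
  rewrite <- (length_map (op G g) (filter (fun x => if excluded_middle_informative (P (g ** x)) then true else false) l)).
  apply NoDup_incl_length. apply NoDup_filter; auto.
  intros y Hy. apply filter_In_iff in Hy. destruct Hy as [_ [HP Hm]].
  apply in_map_iff in Hm. destruct Hm as [x [<- Hx]].
  apply in_map. apply filter_In_iff. split; auto.
Qed.

End S1.

Section S2.
Variable G : Group.
Local Notation "x ** y" := (op G x y) (at level 40, left associativity).
Variable F : nat -> list G.
Hypothesis HF : Folner G F.

Definition PUD (S : G -> Prop) := exists d, 0 < d /\
  forall N, exists n, (N <= n)%nat /\ d * INR (length (F n)) <= INR (cnt G S (F n)).

Lemma Lpos : exists N, forall n, (N <= n)%nat -> (1 <= length (F n))%nat.
Proof. destruct HF as [_ [H _]]. apply H. Qed.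

Lemma defect g eps : 0 < eps -> exists N, forall n, (N <= n)%nat ->
  INR (length (F n)) - INR (cnt G (fun x => In x (map (op G g) (F n))) (F n)) <= eps * INR (length (F n)).
Proof.
  intro He. destruct Lpos as [N1 H1]. destruct HF as [_ [_ H3]].
  destruct (H3 g eps He) as [N2 H2].
  exists (max N1 N2). intros n Hn.
  specialize (H1 n ltac:(lia)). specialize (H2 n ltac:(lia)).
  unfold R_dist in H2. apply Rabs_def2 in H2. destruct H2 as [_ H2].
  set (c := INR (cnt _ _ _)) in *. set (L := INR (length (F n))) in *.
  assert (HL : 1 <= L) by (unfold L; apply (le_INR 1) in H1; exact H1).
  assert (Hc : c = (c / L) * L) by (field; apply Rgt_not_eq; lra).
  set (r := c / L) in *. rewrite Hc. nra.
Qed.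

Lemma translate_lb (P : G -> Prop) g eps : 0 < eps -> exists N, forall n, (N <= n)%nat ->
  INR (cnt G P (F n)) - eps * INR (length (F n)) <= INR (cnt G (fun x => P (g ** x)) (F n)).
Proof.
  intro He. destruct (defect g eps He) as [N H]. exists N. intros n Hn. specialize (H n Hn).
  destruct HF as [HN _].
  pose proof (cnt_and_ge G P (fun x => In x (map (op G g) (F n))) (F n)) as H1.
  pose proof (cnt_translate G P g (F n) (HN n)) as H2.
  apply le_INR in H1. apply le_INR in H2. rewrite !plus_INR in H1. lra.
Qed.

End S2.

Fixpoint nsum (f : nat -> nat) (n : nat) : nat :=
  match n with O => O | S m => (nsum f m + f m)%nat end.

Lemma nsum_lb f n a : (forall k, (k < n)%nat -> a <= INR (f k)) -> INR n * a <= INR (nsum f n).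
Proof.
  induction n as [|n IH]; intro H; cbn [nsum]. simpl; lra.
  rewrite plus_INR, S_INR. assert (H1 := IH (fun k Hk => H k ltac:(lia))).
  assert (H2 := H n ltac:(lia)). lra.
Qed.

Lemma nsum_ub f n b : (forall k, (k < n)%nat -> INR (f k) <= b) -> INR (nsum f n) <= INR n * b.
Proof.
  induction n as [|n IH]; intro H; cbn [nsum]. simpl; lra.
  rewrite plus_INR, S_INR. assert (H1 := IH (fun k Hk => H k ltac:(lia))).
  assert (H2 := H n ltac:(lia)). lra.
Qed.

Lemma bound_all K (Q : nat -> nat -> Prop) :
  (forall k, (k < K)%nat -> exists N, forall n, (N <= n)%nat -> Q k n) ->
  exists N, forall k n, (k < K)%nat -> (N <= n)%nat -> Q k n.
Proof.
  induction K as [|K IH]; intro H. exists O. intros; lia.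
  destruct IH as [N1 H1]. intros k Hk. apply H. lia.
  destruct (H K ltac:(lia)) as [N2 H2].
  exists (max N1 N2). intros k n Hk Hn.
  destruct (Nat.eq_dec k K). subst. apply H2. lia. apply H1; lia.
Qed.

Section S3.
Variable G : Group.
Local Notation "x ** y" := (op G x y) (at level 40, left associativity).

Lemma cnt_false (l : list G) : cnt G (fun _ => False) l = O.
Proof.
  induction l; simpl. reflexivity. rewrite cnt_cons_f by tauto. auto.
Qed.

Lemma union_bound (E : nat -> G -> Prop) (Q : G -> Prop) l N :
  (cnt G (fun x => (exists k, (k < N)%nat /\ E k x) /\ Q x) l <=
   nsum (fun k => cnt G (fun x => E k x /\ Q x) l) N)%nat.
Proof.
  induction N as [|N IH]; simpl.
  - pose proof (cnt_mono G (fun x => (exists k, (k < 0)%nat /\ E k x) /\ Q x) (fun _ => False) l) as Hm. rewrite cnt_false in Hm. apply Hm. intros x _ [[k [Hk _]] _]. lia.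
  - rewrite (cnt_ext G _ (fun x => ((exists k, (k < N)%nat /\ E k x) /\ Q x) \/ (E N x /\ Q x))).
    + pose proof (cnt_or_le G (fun x => (exists k, (k < N)%nat /\ E k x) /\ Q x) (fun x => E N x /\ Q x) l). lia.
    + intro x. split.
      * intros [[k [Hk HE]] HQ]. destruct (Nat.eq_dec k N). subst; right; auto.
        left; split; auto. exists k; split; auto; lia.
      * intros [[[k [Hk HE]] HQ]|[HE HQ]]; split; auto.
        exists k; split; auto; lia. exists N; split; auto; lia.
Qed.

Lemma pairwise (E : nat -> G -> Prop) l N :
  (nsum (fun k => cnt G (E k) l) N <=
   cnt G (fun x => exists k, (k < N)%nat /\ E k x) l +
   nsum (fun m => nsum (fun k => cnt G (fun x => E k x /\ E m x) l) m) N)%nat.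
Proof.
  induction N as [|N IH]; simpl. lia.
  pose proof (cnt_or_and G (fun x => exists k, (k < N)%nat /\ E k x) (E N) l) as H1.
  pose proof (union_bound E (E N) l N) as H2.
  rewrite (cnt_ext G (fun x => exists k, (k < S N)%nat /\ E k x)
             (fun x => (exists k, (k < N)%nat /\ E k x) \/ E N x)).
  lia.
  intro x; split.
  - intros [k [Hk HE]]. destruct (Nat.eq_dec k N). subst; right; auto. left; exists k; split; auto; lia.
  - intros [[k [Hk HE]]|HE]. exists k; split; auto; lia. exists N; split; auto; lia.
Qed.

Fixpoint pre_seq (p : list G -> G) (n : nat) : list G :=
  match n with O => [] | S m => pre_seq p m ++ [p (pre_seq p m)] end.

Lemma pre_seq_map p n : pre_seq p n = map (fun i => p (pre_seq p i)) (seq 0 n).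
Proof.
  induction n as [|n IH]. reflexivity. cbn [pre_seq].
  rewrite seq_S, map_app, <- IH. reflexivity.
Qed.

Lemma seq_avoid : (forall L : list G, exists h, ~ In h L) -> forall X : list G,
  exists hs : nat -> G, forall k l, (k < l)%nat -> ~ In (hs l ** inv G (hs k)) X.
Proof.
  intros Hinf X.
  set (pick := fun L => proj1_sig (constructive_indefinite_description _ (Hinf L))).
  assert (Hpick : forall L, ~ In (pick L) L) by (intro L; unfold pick; destruct constructive_indefinite_description; auto).
  set (bad := fun L : list G => flat_map (fun y => map (fun x => x ** y) X) L).
  set (p := fun L => pick (bad L)).
  exists (fun i => p (pre_seq p i)).
  intros k l Hkl Hin.
  apply (Hpick (bad (pre_seq p l))).
  fold (p (pre_seq p l)).
  rewrite <- (cancel1 G (p (pre_seq p l)) (p (pre_seq p k))).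
  unfold bad. apply in_flat_map. exists (p (pre_seq p k)). split.
  - rewrite (pre_seq_map p l). apply (in_map (fun i => p (pre_seq p i))). apply in_seq. lia.
  - apply (in_map (fun x => x ** p (pre_seq p k))). exact Hin.
Qed.

End S3.

Section S4.
Variable G : Group.
Local Notation "x ** y" := (op G x y) (at level 40, left associativity).
Variable F : nat -> list G.
Hypothesis HF : Folner G F.
Hypothesis Hinf : forall L : list G, exists h, ~ In h L.

Lemma key S X : PUD G F S -> exists h, ~ In h X /\ PUD G F (fun y => S y /\ S (h ** y)).
Proof.
  intros [d [Hd HS]].
  destruct (archimed_cor1 (d/4)) as [N [HN1 HN2]]; [lra|].
  assert (HNpos : 0 < INR N) by (apply lt_0_INR; lia).
  assert (HN1' : 1 <= INR N) by (apply (le_INR 1); lia).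
  assert (HNd : 4 < INR N * d).
  { apply (Rmult_lt_compat_l (INR N)) in HN1; auto. rewrite Rinv_r in HN1 by lra.
    assert (INR N * (d/4) = INR N * d / 4) by field. lra. }
  destruct (seq_avoid G Hinf X) as [hs Hhs].
  apply NNPP; intro Hno.
  assert (Hno' : forall h, ~ In h X -> ~ PUD G F (fun y => S y /\ S (h ** y)))
    by (intros h Hh HP; apply Hno; exists h; auto).
  set (eps := / (8 * INR N * INR N)).
  assert (Heps : 0 < eps) by (unfold eps; apply Rinv_0_lt_compat; nra).
  set (E := fun k x => S (hs k ** x)).
  assert (Hpair : forall l, (l < N)%nat -> exists M, forall n, (M <= n)%nat -> forall k, (k < l)%nat ->
     INR (cnt G (fun x => E k x /\ E l x) (F n)) <= 2 * eps * INR (length (F n))).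
  { intros l Hl.
    destruct (bound_all l (fun k n => INR (cnt G (fun x => E k x /\ E l x) (F n)) <= 2 * eps * INR (length (F n)))) as [M HM].
    - intros k Hk.
      set (T := fun y => S y /\ S ((hs l ** inv G (hs k)) ** y)).
      assert (HT : ~ PUD G F T) by (apply Hno'; apply Hhs; lia).
      assert (HT2 : exists N1, forall n, (N1 <= n)%nat -> INR (cnt G T (F n)) < eps * INR (length (F n))).
      { apply NNPP; intro H1. apply HT. exists eps; split; auto. intro N1. apply NNPP; intro H2.
        apply H1. exists N1. intros n Hn. apply Rnot_le_lt. intro H3. apply H2. exists n; auto. }
      destruct HT2 as [N1 HN1''].
      destruct (translate_lb G F HF (fun x => T (hs k ** x)) (inv G (hs k)) eps Heps) as [N2 HN2'].
      exists (max N1 N2). intros n Hn.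
      specialize (HN1'' n ltac:(lia)). specialize (HN2' n ltac:(lia)). cbv beta in HN2'.
      rewrite (cnt_ext G (fun x => T (hs k ** (inv G (hs k) ** x))) T) in HN2'
        by (intro x; rewrite cancel2; tauto).
      assert (Hm : (cnt G (fun x => E k x /\ E l x) (F n) <= cnt G (fun x => T (hs k ** x)) (F n))%nat).
      { apply cnt_mono. intros x _ [H1 H2]. unfold T, E in *. split; auto.
        rewrite (op_assoc G (hs l ** inv G (hs k)) (hs k) x), cancel1. auto. }
      apply le_INR in Hm. lra.
    - exists M. intros n Hn k Hk. apply HM; auto. }
  destruct (bound_all N _ Hpair) as [M1 HM1].
  destruct (bound_all N (fun k n => INR (cnt G S (F n)) - eps * INR (length (F n)) <= INR (cnt G (E k) (F n)))) as [M2 HM2].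
  { intros k Hk. apply (translate_lb G F HF S (hs k) eps Heps). }
  destruct (Lpos G F HF) as [M3 HM3].
  destruct (HS (max M1 (max M2 M3))) as [n [Hn Hdn]].
  set (L := INR (length (F n))) in *.
  assert (HL : 1 <= L) by (unfold L; apply (le_INR 1); apply HM3; lia).
  assert (A1 : INR N * (d * L - eps * L) <= INR (nsum (fun k => cnt G (E k) (F n)) N)).
  { apply nsum_lb. intros k Hk. specialize (HM2 k n Hk ltac:(lia)). unfold L in *. lra. }
  pose proof (pairwise G E (F n) N) as A2. apply le_INR in A2. rewrite plus_INR in A2.
  pose proof (cnt_le_length G (fun x => exists k, (k < N)%nat /\ E k x) (F n)) as A3.
  apply le_INR in A3.
  assert (A4 : INR (nsum (fun m => nsum (fun k => cnt G (fun x => E k x /\ E m x) (F n)) m) N)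
               <= INR N * (INR N * (2 * eps * L))).
  { apply nsum_ub. intros l Hl.
    apply Rle_trans with (INR l * (2 * eps * L)).
    - apply nsum_ub. intros k Hk. apply (HM1 l n Hl ltac:(lia) k Hk).
    - apply Rmult_le_compat_r. nra. apply le_INR. lia. }
  assert (e1 : INR N * (INR N * (2 * eps * L)) = L / 4) by (unfold eps; field; lra).
  assert (e2 : INR N * (d * L - eps * L) = (INR N * d) * L - L / (8 * INR N)) by (unfold eps; field; lra).
  assert (e3 : L / (8 * INR N) <= L / 8).
  { unfold Rdiv. apply Rmult_le_compat_l. lra. apply Rinv_le_contravar; lra. }
  assert (e4 : 4 * L < (INR N * d) * L) by nra.
  rewrite e2 in A1. rewrite e1 in A4. unfold L in *. lra.
Qed.

End S4.

Section S5.
Variable G : Group.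
Local Notation "x ** y" := (op G x y) (at level 40, left associativity).
Variable F : nat -> list G.
Hypothesis HF : Folner G F.
Hypothesis Hinf : forall L : list G, exists h, ~ In h L.

Lemma pud_avoid S L : PUD G F S -> exists x, S x /\ ~ In x L.
Proof.
  intros [d [Hd HS]]. apply NNPP; intro H.
  assert (H' : forall x, S x -> In x L) by (intros x Hx; apply NNPP; intro; apply H; exists x; auto).
  destruct (INR_unbounded (INR (length L) / d)) as [M HM].
  destruct HF as [HN [HL _]]. destruct (HL M) as [N HN'].
  destruct (HS N) as [n [Hn Hc]].
  assert (H1 : (cnt G S (F n) <= length L)%nat).
  { apply Nat.le_trans with (cnt G (fun x => In x L) (F n)). apply cnt_mono; auto. apply cnt_in_list; auto. }
  apply le_INR in H1.
  assert (H2 : INR M <= INR (length (F n))) by (apply le_INR; auto).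
  assert (H3 : d * INR M <= d * INR (length (F n))) by (apply Rmult_le_compat_l; lra).
  assert (H4 : INR (length L) < d * INR M).
  { apply (Rmult_lt_compat_l d) in HM; auto.
    assert (d * (INR (length L) / d) = INR (length L)) by (field; lra). lra. }
  lra.
Qed.

Lemma exC S L : exists x, PUD G F S -> S x /\ ~ In x L.
Proof.
  destruct (classic (PUD G F S)) as [H|H].
  - destruct (pud_avoid S L H) as [x Hx]. exists x; auto.
  - exists (one G). intro; contradiction.
Qed.

Lemma exH S X : exists h, PUD G F S -> ~ In h X /\ PUD G F (fun y => S y /\ S (h ** y)).
Proof.
  destruct (classic (PUD G F S)) as [H|H].
  - destruct (key G F HF Hinf S X H) as [x Hx]. exists x; auto.
  - exists (one G). intro; contradiction.
Qed.

Definition pickC S L := proj1_sig (constructive_indefinite_description _ (exC S L)).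
Definition pickH S X := proj1_sig (constructive_indefinite_description _ (exH S X)).
Lemma pickC_spec S L : PUD G F S -> S (pickC S L) /\ ~ In (pickC S L) L.
Proof. unfold pickC. destruct constructive_indefinite_description; auto. Qed.
Lemma pickH_spec S X : PUD G F S -> ~ In (pickH S X) X /\ PUD G F (fun y => S y /\ S (pickH S X ** y)).
Proof. unfold pickH. destruct constructive_indefinite_description; auto. Qed.

Variable A : G -> Prop.
Hypothesis HA : PUD G F A.

Fixpoint st (n : nat) : (G -> Prop) * list G * list G :=
  match n with
  | O => (A, [], [])
  | S m => let p := st m in
      ((fun y => fst (fst p) y /\ fst (fst p) (pickH (fst (fst p)) (snd (fst p)) ** y)),
       snd (fst p) ++ [pickH (fst (fst p)) (snd (fst p))],
       snd p ++ [pickC (fst (fst p)) (snd p)])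
  end.

Definition Sf n := fst (fst (st n)).
Definition bsf n := snd (fst (st n)).
Definition csf n := snd (st n).
Definition bb n := pickH (Sf n) (bsf n).
Definition cc n := pickC (Sf n) (csf n).

Lemma Sf_S n y : Sf (S n) y <-> Sf n y /\ Sf n (bb n ** y).
Proof. reflexivity. Qed.

Lemma bsf_map n : bsf n = map bb (seq 0 n).
Proof.
  induction n as [|n IH]. reflexivity.
  rewrite seq_S, map_app, <- IH. reflexivity.
Qed.

Lemma csf_map n : csf n = map cc (seq 0 n).
Proof.
  induction n as [|n IH]. reflexivity.
  rewrite seq_S, map_app, <- IH. reflexivity.
Qed.

Lemma Sf_pud n : PUD G F (Sf n).
Proof.
  induction n as [|n IH]. exact HA.
  apply (pickH_spec (Sf n) (bsf n) IH).
Qed.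

Lemma Sf_A n y : Sf n y -> A y.
Proof.
  revert y; induction n as [|n IH]; intros y Hy. exact Hy.
  apply IH. exact (proj1 (proj1 (Sf_S n y) Hy)).
Qed.

Lemma Sf_mono n m y : (n <= m)%nat -> Sf m y -> Sf n y.
Proof.
  intro H; induction H as [|m H IH]; auto.
  intro Hy; apply IH. exact (proj1 (proj1 (Sf_S m y) Hy)).
Qed.

Lemma construct : exists b c : nat -> G,
  (forall n m, b n = b m -> n = m) /\ (forall n m, c n = c m -> n = m) /\
  (forall i, A (c i)) /\ (forall i j, (j < i)%nat -> A (b j ** c i)).
Proof.
  exists bb, cc. split; [|split; [|split]].
  - assert (K : forall k l, (k < l)%nat -> bb k <> bb l).
    { intros k l Hkl He. destruct (pickH_spec (Sf l) (bsf l) (Sf_pud l)) as [H _].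
      apply H. fold (bb l). rewrite <- He, bsf_map. apply in_map. apply in_seq. lia. }
    intros n m He. destruct (Nat.lt_trichotomy n m) as [H|[H|H]]; auto.
    exfalso; eapply K; eauto. exfalso; eapply K; eauto.
  - assert (K : forall k l, (k < l)%nat -> cc k <> cc l).
    { intros k l Hkl He. destruct (pickC_spec (Sf l) (csf l) (Sf_pud l)) as [_ H].
      apply H. fold (cc l). rewrite <- He, csf_map. apply in_map. apply in_seq. lia. }
    intros n m He. destruct (Nat.lt_trichotomy n m) as [H|[H|H]]; auto.
    exfalso; eapply K; eauto. exfalso; eapply K; eauto.
  - intro i. apply (Sf_A i). apply (pickC_spec (Sf i) (csf i) (Sf_pud i)).
  - intros i j Hji. assert (H := proj1 (pickC_spec (Sf i) (csf i) (Sf_pud i))). fold (cc i) in H.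
    apply (Sf_mono (S j)) in H; [|lia]. apply (Sf_A j). exact (proj2 (proj1 (Sf_S j _) H)).
Qed.

End S5.

Theorem mainTheorem6 (G : Group) (A : G -> Prop) :
  infinite_group G -> countable_group G -> amenable G ->
  stable_set G A ->
  (exists d, upper_banach_density G A d /\ 0 < d) ->
  exists B C : G -> Prop,
    infinite_set G B /\ infinite_set G C /\
    (forall b, B b -> exists a1 a2, A a1 /\ A a2 /\ b = op G a1 (inv G a2)) /\
    (forall c, C c -> A c) /\
    (forall b c, B b -> C c -> A (op G b c)).
Proof.
  intros [f [Hf _]] _ _ [n Hstab] [d [Hlub Hd]].
  assert (Hinf : forall L : list G, exists h, ~ In h L).
  { intro L. apply NNPP; intro H.
    assert (Hincl : incl (map f (seq 0 (S (length L)))) L).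
    { intros x Hx. apply NNPP; intro Hx'. apply H. exists x. auto. }
    apply NoDup_incl_length in Hincl.
    - rewrite length_map, length_seq in Hincl. lia.
    - apply NoDup_map_NoDup_ForallPairs. intros x y _ _ Hxy. apply Hf; auto. apply seq_NoDup. }
  assert (HF : exists F r, Folner G F /\ upper_density G F A r /\ 0 < r).
  { apply NNPP; intro H. assert (Hub : is_upper_bound (fun r => exists F, Folner G F /\ upper_density G F A r) 0).
    { intros r [F [HF Hr]]. apply Rnot_lt_le. intro Hr0. apply H. exists F, r. auto. }
    destruct Hlub as [_ Hl]. specialize (Hl 0 Hub). lra. }
  destruct HF as [F [r [HF [Hr Hr0]]]].
  assert (HA : PUD G F A).
  { exists (r / 2). split. lra. intro N. destruct (Lpos G F HF) as [N3 H3].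
    destruct (Hr (r/2) ltac:(lra)) as [_ Hr2]. destruct (Hr2 (max N N3)) as [m [Hm Hm']].
    exists m. split. lia. specialize (H3 m ltac:(lia)). apply (le_INR 1) in H3. simpl in H3.
    set (c := INR (cnt G A (F m))) in *. set (L := INR (length (F m))) in *.
    assert (Hc : c = (c / L) * L) by (field; apply Rgt_not_eq; lra).
    set (q := c / L) in *. rewrite Hc. nra. }
  destruct (construct G F HF Hinf A HA) as [b [c [Hb [Hc [HcA HbcA]]]]].
  destruct (ramsey (fun p q => A (op G (b q) (c p)))) as [phi [Hphi [Hall|Hnone]]].
  - assert (Hphi_inj : forall i j, phi i = phi j -> i = j).
    { intros i j H. destruct (Nat.lt_trichotomy i j) as [H1|[H1|H1]]; auto.
      apply Hphi in H1; lia. apply Hphi in H1; lia. }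
    assert (HBC : forall k m, A (op G (b (phi (2 * k + 1)%nat)) (c (phi (2 * m)%nat)))).
    { intros k m. destruct (Nat.lt_ge_cases (2 * m) (2 * k + 1)) as [H|H].
      - apply (Hall _ _ H).
      - apply HbcA. apply Hphi. lia. }
    exists (fun x => exists k, x = b (phi (2 * k + 1)%nat)), (fun x => exists k, x = c (phi (2 * k)%nat)).
    split; [|split; [|split; [|split]]].
    + exists (fun k => b (phi (2 * k + 1)%nat)). split; [|intro k; exists k; auto].
      intros i j H. apply Hb, Hphi_inj in H. lia.
    + exists (fun k => c (phi (2 * k)%nat)). split; [|intro k; exists k; auto].
      intros i j H. apply Hc, Hphi_inj in H. lia.
    + intros x [k ->]. exists (op G (b (phi (2 * k + 1)%nat)) (c (phi (2 * 0)%nat))), (c (phi (2 * 0)%nat)).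
      split. apply HBC. split. apply HcA. rewrite cancel4. reflexivity.
    + intros x [k ->]. apply HcA.
    + intros x y [k ->] [m ->]. apply HBC.
  - exfalso. apply Hstab.
    exists (fun i => c (phi (2 * (n - i) + 1)%nat)), (fun j => b (phi (2 * (n - j))%nat)).
    intros i j Hi Hj. split.
    + intro HA'. apply NNPP; intro Hij.
      apply (Hnone (2 * (n - i) + 1)%nat (2 * (n - j))%nat). lia. exact HA'.
    + intro Hij. apply HbcA. apply Hphi. lia.
Qed.
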